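(* For every real $t>0$, $$\lim_{n \to \infty} \sum_{k=0}^{n} N_{0,n-k}(k+t) = \frac{2}{3}.$$
   Context: $N_{0,m}$ denotes the uniform B-spline of degree $m$ with knots $0,1,\ldots,m+1$ and support $[0,m+1]$: $N_{0,0}(t)=\chi_{[0,1]}(t)$ (the indicator of $[0,1]$) and $N_{0,m}(t)=\int_{t-1}^{t}N_{0,m-1}(x)\,dx$ for $m\ge1$; i.e. $N_{0,m}$ is the $(m+1)$-fold convolution of $\chi_{[0,1]}$ with itself. *)

(* Defs.v *)
From Stdlib Require Import Reals.
From Coquelicot Require Import Coquelicot.
Open Scope R_scope.

Definition chi01 (t : R) : R :=
  if Rle_dec 0 t then (if Rle_dec t 1 then 1 else 0) else 0.

(* Uniform B-spline N_{0,m} of degree m with knots 0,1,...,m+1: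
   N_{0,0} = chi_[0,1],  N_{0,m}(t) = int_{t-1}^{t} N_{0,m-1}(x) dx. *)
Fixpoint Bspline (m : nat) (t : R) : R :=
  match m with
  | O => chi01 t
  | S m' => RInt (Bspline m') (t - 1) t
  end.

(* Main.v *)
Require Import Defs.
From Stdlib Require Import Reals.
From Coquelicot Require Import Coquelicot.
From Stdlib Require Import Lra Lia Factorial ZArith.
Open Scope R_scope.


Definition EX (f : R -> R) := forall a b, ex_RInt f a b.

Definition RC (f : R -> R) a b (H : ex_RInt f a b) :=
  RInt_correct (V:=R_CompleteNormedModule) f a b H.

Lemma Chas (f : R -> R) a b c : ex_RInt f a b -> ex_RInt f b c ->
  @eq R (RInt f a b + RInt f b c) (RInt f a c).
Proof. intros H1 H2. symmetry. apply is_RInt_unique.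
  exact (is_RInt_Chasles f a b c _ _ (RC f a b H1) (RC f b c H2)). Qed.

Lemma RIc a b c : @eq R (RInt (fun _ => c) a b) ((b - a) * c).
Proof. apply is_RInt_unique. exact (is_RInt_const a b c). Qed.

Lemma RI_lin (f : R -> R) a b al be : ex_RInt f a b ->
  @eq R (RInt (fun y => al * f y + be) a b) (al * RInt f a b + (b - a) * be).
Proof. intros H.
  apply is_RInt_unique.
  apply (is_RInt_plus (fun y => scal al (f y)) (fun _ => be)).
  - apply (is_RInt_scal f). exact (RC f a b H).
  - apply (is_RInt_const a b be).
Qed.

Lemma EX_lin (f : R -> R) al be : EX f -> EX (fun y => al * f y + be).
Proof. intros H a b. exists (al * RInt f a b + (b - a) * be).
  apply (is_RInt_plus (fun y => scal al (f y)) (fun _ => be)).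
  - apply (is_RInt_scal f). exact (RC f a b (H a b)).
  - apply (is_RInt_const a b be).
Qed.

Lemma RI_minus (f g : R -> R) a b : ex_RInt f a b -> ex_RInt g a b ->
  @eq R (RInt (fun y => f y - g y) a b) (RInt f a b - RInt g a b).
Proof. intros H1 H2. apply is_RInt_unique.
  exact (is_RInt_minus f g a b _ _ (RC f a b H1) (RC g a b H2)). Qed.

Lemma EX_minus (f g : R -> R) : EX f -> EX g -> EX (fun y => f y - g y).
Proof. intros H1 H2 a b. exists (RInt f a b - RInt g a b).
  exact (is_RInt_minus f g a b _ _ (RC f a b (H1 a b)) (RC g a b (H2 a b))). Qed.

Lemma RI_ge0 (f : R -> R) a b : a <= b -> ex_RInt f a b ->
  (forall x, a < x < b -> 0 <= f x) -> 0 <= RInt f a b.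
Proof. apply RInt_ge_0. Qed.

Lemma RI_lower (f : R -> R) a b c : a <= b -> ex_RInt f a b ->
  (forall x, a < x < b -> c <= f x) -> (b - a) * c <= RInt f a b.
Proof. intros. rewrite <- RIc. apply RInt_le; auto. apply ex_RInt_const. Qed.

Lemma RI_upper (f : R -> R) a b c : a <= b -> ex_RInt f a b ->
  (forall x, a < x < b -> f x <= c) -> RInt f a b <= (b - a) * c.
Proof. intros. rewrite <- RIc. apply RInt_le; auto. apply ex_RInt_const. Qed.

Lemma is_shift (f : R -> R) a b c l : is_RInt f (a + c) (b + c) l ->
  is_RInt (fun s => f (s + c)) a b l.
Proof. intros H.
  pose proof (is_RInt_comp_lin (V:=R_NormedModule) f 1 c a b l) as H2.
  rewrite !Rmult_1_l in H2. specialize (H2 H).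
  apply (is_RInt_ext (fun y : R => scal 1 (f (1 * y + c))) (fun s => f (s + c)) a b l); [|exact H2].
  intros x _. change (1 * f (1 * x + c) = f (x + c)). rewrite !Rmult_1_l. reflexivity.
Qed.

Lemma RI_shift (f : R -> R) a b c : EX f ->
  @eq R (RInt (fun s => f (s + c)) a b) (RInt f (a + c) (b + c)).
Proof. intros H. apply is_RInt_unique. apply is_shift. apply RC. apply H. Qed.

Lemma EX_shift (f : R -> R) c : EX f -> EX (fun s => f (s + c)).
Proof. intros H a b. exists (RInt f (a + c) (b + c)). apply is_shift. apply RC. apply H. Qed.

Lemma EX_ext (f g : R -> R) : (forall x, f x = g x) -> EX f -> EX g.
Proof. intros E H a b. apply (ex_RInt_ext f). intros; auto. apply H. Qed.

Lemma EX_sum (g : nat -> R -> R) n : (forall k, EX (g k)) ->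
  EX (fun s => sum_f_R0 (fun k => g k s) n).
Proof. intros H a b. induction n as [|n IH]; simpl. apply H.
  destruct IH as [l1 H1]. destruct (H (S n) a b) as [l2 H2].
  exists (plus l1 l2).
  apply (is_RInt_plus (fun s => sum_f_R0 (fun k => g k s) n) (g (S n))); auto.
Qed.

Lemma RI_sum (g : nat -> R -> R) a b n : (forall k, EX (g k)) ->
  @eq R (RInt (fun s => sum_f_R0 (fun k => g k s) n) a b) (sum_f_R0 (fun k => RInt (g k) a b) n).
Proof. intros H. induction n as [|n IH]; simpl.
  - reflexivity.
  - rewrite <- IH. apply is_RInt_unique.
    apply (is_RInt_plus (fun s => sum_f_R0 (fun k => g k s) n) (g (S n))).
    + apply RC. apply EX_sum; auto.
    + apply RC. apply H.
Qed.

Definition Cont (f : R -> R) x := @continuous R_UniformSpace R_UniformSpace f x.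
Lemma C_minus f g x : Cont f x -> Cont g x -> Cont (fun y => f y - g y) x.
Proof. intros. apply (continuous_minus (V:=R_NormedModule) f g x); auto. Qed.
Lemma C_plus f g x : Cont f x -> Cont g x -> Cont (fun y => f y + g y) x.
Proof. intros. apply (continuous_plus (V:=R_NormedModule) f g x); auto. Qed.
Lemma C_mult f g x : Cont f x -> Cont g x -> Cont (fun y => f y * g y) x.
Proof. intros. apply (continuous_mult f g x); auto. Qed.
Lemma C_const c x : Cont (fun _ => c) x.
Proof. apply continuous_const. Qed.
Lemma C_id x : Cont (fun y => y) x.
Proof. apply continuous_id. Qed.
Lemma C_comp f g x : Cont f x -> Cont g (f x) -> Cont (fun y => g (f y)) x.
Proof. intros. apply (continuous_comp f g x); auto. Qed.
Lemma C_ext f g x : (forall y, f y = g y) -> Cont f x -> Cont g x.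
Proof. intros. apply (continuous_ext f g x); auto. Qed.
Lemma C_ext_loc f g x : locally x (fun y => f y = g y) -> Cont f x -> Cont g x.
Proof. intros H H0. apply (continuous_ext_loc g f x); auto. Qed.
Lemma C_prim (f : R -> R) a x : EX f -> Cont (fun y => RInt f a y) x.
Proof. intros H. apply (continuous_RInt_1 (V:=R_NormedModule) f a x).
  apply filter_forall. intros y. apply RC. apply H. Qed.
Lemma C_EX (f : R -> R) : (forall x, Cont f x) -> EX f.
Proof. intros H a b. apply (ex_RInt_continuous (V:=R_CompleteNormedModule)). intros; apply H. Qed.

Lemma C_sub1 (g : R -> R) c x : Cont g (x - c) -> Cont (fun y => g (y - c)) x.
Proof. intros H. apply (C_comp (fun y => y - c) g). apply C_minus. apply C_id. apply C_const. exact H. Qed.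

Lemma C_window (f : R -> R) x : EX f -> Cont (fun y => RInt f (y - 1) y) x.
Proof. intros H.
  apply (C_ext (fun y => RInt f 0 y - RInt f 0 (y - 1))).
  - intros y. rewrite <- (Chas f 0 (y-1) y); auto. ring.
  - apply C_minus. apply C_prim; auto.
    apply (C_sub1 (fun y => RInt f 0 y)). apply C_prim; auto.
Qed.

Lemma RIext (f g : R -> R) a b : (forall x, Rmin a b < x < Rmax a b -> f x = g x) ->
  @eq R (RInt f a b) (RInt g a b).
Proof. apply RInt_ext. Qed.



Notation N := Bspline.

Lemma N_S m t : N (S m) t = RInt (N m) (t - 1) t.
Proof. reflexivity. Qed.

Lemma EX_of_big (f : R -> R) : (forall K, 1 <= K -> ex_RInt f (-K) K) -> EX f.
Proof. intros H a b.
  assert (Hg : forall a b, a <= b -> ex_RInt f a b).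
  { clear a b. intros a b Hab. set (K := Rabs a + Rabs b + 1).
    assert (HK : 1 <= K) by (unfold K; pose proof (Rabs_pos a); pose proof (Rabs_pos b); lra).
    pose proof (Rle_abs a). pose proof (Rle_abs (-a)). rewrite Rabs_Ropp in *.
    pose proof (Rle_abs b). pose proof (Rle_abs (-b)). rewrite Rabs_Ropp in *.
    apply (ex_RInt_Chasles_2 f (-K)). unfold K; lra.
    apply (ex_RInt_Chasles_1 f (-K) b K). unfold K; lra. apply H; auto. }
  destruct (Rle_dec a b). apply Hg; auto. apply ex_RInt_swap. apply Hg. lra.
Qed.

Lemma chi01_EX : EX chi01.
Proof. apply EX_of_big. intros K HK.
  apply (ex_RInt_Chasles chi01 (-K) 0 K).
  - apply (ex_RInt_ext (fun _ => 0)). intros x Hx. rewrite Rmin_left in Hx by lra. rewrite Rmax_right in Hx by lra.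
    unfold chi01. destruct (Rle_dec 0 x); try lra. apply ex_RInt_const.
  - apply (ex_RInt_Chasles chi01 0 1 K).
    + apply (ex_RInt_ext (fun _ => 1)). intros x Hx. rewrite Rmin_left in Hx by lra. rewrite Rmax_right in Hx by lra.
      unfold chi01. destruct (Rle_dec 0 x); try lra. destruct (Rle_dec x 1); try lra. apply ex_RInt_const.
    + apply (ex_RInt_ext (fun _ => 0)). intros x Hx. rewrite Rmin_left in Hx by lra. rewrite Rmax_right in Hx by lra.
      unfold chi01. destruct (Rle_dec 0 x); try lra. destruct (Rle_dec x 1); try lra. apply ex_RInt_const.
Qed.

Lemma N_EX m : EX (N m).
Proof. induction m as [|m IH].
  - exact chi01_EX.
  - apply C_EX. intros x. apply (C_window (N m) x IH).
Qed.

Lemma N_cont m x : Cont (N (S m)) x.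
Proof. apply (C_window (N m) x (N_EX m)). Qed.

Lemma RI_zero (f : R -> R) a b : a <= b -> (forall x, a < x < b -> f x = 0) -> RInt f a b = 0.
Proof. intros Hab H. rewrite (RInt_ext f (fun _ => 0)). rewrite RIc. apply Rmult_0_r.
  intros x Hx. rewrite Rmin_left in Hx by lra. rewrite Rmax_right in Hx by lra. auto. Qed.

Lemma N_neg m y : y < 0 -> N m y = 0.
Proof. revert y. induction m as [|m IH]; intros y Hy.
  - simpl. unfold chi01. destruct (Rle_dec 0 y); lra.
  - rewrite N_S. apply RI_zero. lra. intros x Hx. apply IH. lra.
Qed.

Lemma N_nonpos m y : y <= 0 -> N (S m) y = 0.
Proof. intros Hy. rewrite N_S. apply RI_zero. lra. intros x Hx. apply N_neg. lra. Qed.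

Lemma N_big m y : INR m + 1 < y -> N m y = 0.
Proof. revert y. induction m as [|m IH]; intros y Hy.
  - simpl in *. unfold chi01. destruct (Rle_dec 0 y); try lra. destruct (Rle_dec y 1); lra.
  - rewrite N_S. apply RI_zero. lra. intros x Hx. apply IH. rewrite S_INR in Hy. lra.
Qed.

Lemma N_bounds m y : 0 <= N m y <= 1.
Proof. revert y. induction m as [|m IH]; intros y.
  - simpl. unfold chi01. destruct (Rle_dec 0 y); try lra. destruct (Rle_dec y 1); lra.
  - rewrite N_S. split.
    + apply RI_ge0. lra. apply N_EX. intros; apply IH.
    + assert (Hu := RI_upper (N m) (y - 1) y 1 ltac:(lra) (N_EX m _ _) (fun x _ => proj2 (IH x))). lra.
Qed.

Lemma is_RInt_pow m a b :
  is_RInt (fun s => s ^ m / INR (fact m)) a b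
    (b ^ (S m) / INR (fact (S m)) - a ^ (S m) / INR (fact (S m))).
Proof.
  apply (is_RInt_derive (fun s => s ^ (S m) / INR (fact (S m)))).
  - intros x _. auto_derive; auto.
    assert (E : forall k, match k with 0%nat => 1 | S _ => INR k + 1 end = INR (S k)) by (intros [|k]; reflexivity).
    rewrite E. replace (fact m + m * fact m)%nat with (S m * fact m)%nat by (simpl; lia). rewrite mult_INR.
    assert (INR (fact m) <> 0) by apply INR_fact_neq_0.
    assert (INR (S m) <> 0) by (apply not_0_INR; lia).
    field. auto.
  - intros x _. apply (continuous_ext (fun s => s ^ m * / INR (fact m))). intros; reflexivity.
    apply (ex_derive_continuous (fun s => s ^ m * / INR (fact m))). auto_derive. auto.
Qed.

Lemma EX_pow m : EX (fun s => s ^ m / INR (fact m)).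
Proof. intros a b. eexists. apply is_RInt_pow. Qed.

Lemma RI_pow m y : RInt (fun s => s ^ m / INR (fact m)) 0 y = y ^ (S m) / INR (fact (S m)).
Proof. apply is_RInt_unique. 
  replace (y ^ S m / INR (fact (S m))) with (y ^ (S m) / INR (fact (S m)) - 0 ^ (S m) / INR (fact (S m))).
  apply is_RInt_pow. replace (0 ^ S m) with 0 by (simpl; ring). unfold Rdiv. ring. Qed.

Lemma N_pow m y : 0 <= y -> N m y <= y ^ m / INR (fact m).
Proof. revert y. induction m as [|m IH]; intros y Hy.
  - simpl. unfold Rdiv. rewrite Rinv_1, Rmult_1_r. apply (N_bounds 0 y).
  - rewrite N_S. rewrite <- RI_pow.
    set (g := fun s => s ^ m / INR (fact m)).
    assert (Hg : forall s, 0 <= s -> 0 <= g s).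
    { intros s Hs. unfold g. apply Rdiv_le_0_compat. apply pow_le; auto. apply lt_0_INR. apply lt_O_fact. }
    destruct (Rle_dec y 1) as [H1|H1].
    + rewrite <- (Chas (N m) (y - 1) 0 y) by apply N_EX.
      rewrite (RI_zero (N m) (y-1) 0) by (try lra; intros; apply N_neg; lra).
      rewrite Rplus_0_l. apply RInt_le; auto. apply N_EX. apply EX_pow.
      intros x Hx. apply IH. lra.
    + rewrite <- (Chas g 0 (y - 1) y) by apply EX_pow.
      assert (0 <= RInt g 0 (y-1)). { apply RI_ge0. lra. apply EX_pow. intros; apply Hg; lra. }
      assert (RInt (N m) (y-1) y <= RInt g (y-1) y).
      { apply RInt_le. lra. apply N_EX. apply EX_pow. intros x Hx. apply IH. lra. }
      lra.
Qed.



Definition G n x := sum_f_R0 (fun k => N (n - k) (x - INR (S n) + INR k)) n.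

Lemma G_S n x : G (S n) x = N (S n) (x - INR (S (S n))) + G n x.
Proof. unfold G. rewrite decomp_sum by lia. simpl pred. f_equal.
  - replace (S n - 0)%nat with (S n) by lia. f_equal. simpl INR at 2. ring.
  - apply sum_eq. intros i Hi. replace (S n - S i)%nat with (n - i)%nat by lia. f_equal.
    rewrite !S_INR. ring.
Qed.

Lemma G_stable n p x : x < INR n + 2 -> G (n + p) x = G n x.
Proof. intros Hx. induction p as [|p IH].
  - rewrite Nat.add_0_r. reflexivity.
  - rewrite Nat.add_succ_r, G_S, IH. rewrite N_neg. ring.
    rewrite !S_INR, plus_INR. pose proof (pos_INR p). lra.
Qed.

Lemma G_EX n : EX (G n).
Proof. unfold G. apply (EX_sum (fun k s => N (n - k) (s - INR (S n) + INR k))).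
  intros k. apply (EX_ext (fun s => N (n - k) (s + (- INR (S n) + INR k)))).
  intros x. f_equal. ring. apply EX_shift. apply N_EX.
Qed.

Lemma sum_bounds (a : nat -> R) n : (forall k, 0 <= a k <= 1) -> 0 <= sum_f_R0 a n <= INR n + 1.
Proof. intros H. induction n as [|n IH]. simpl. specialize (H 0%nat). lra.
  rewrite tech5, S_INR. specialize (H (S n)). lra. Qed.

Lemma G_bounds n x : 0 <= G n x <= INR n + 1.
Proof. apply sum_bounds. intros; apply N_bounds. Qed.

Lemma G_rec n x : G (S n) x = chi01 (x - 1) + RInt (G n) (x - 2) (x - 1).
Proof. unfold G at 1. rewrite tech5. rewrite Rplus_comm. f_equal.
  - rewrite Nat.sub_diag. change (N 0) with chi01. f_equal. rewrite !S_INR. ring.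
  - unfold G. rewrite (RI_sum (fun k s => N (n - k) (s - INR (S n) + INR k))).
    + apply sum_eq. intros k Hk.
      replace (S n - k)%nat with (S (n - k)) by lia. rewrite N_S.
      rewrite (RInt_ext (fun s => N (n - k) (s - INR (S n) + INR k)) (fun s => N (n - k) (s + (- INR (S n) + INR k)))).
      rewrite RI_shift by apply N_EX. f_equal; rewrite !S_INR; ring.
      intros y _. f_equal. ring.
    + intros k. apply (EX_ext (fun s => N (n - k) (s + (- INR (S n) + INR k)))).
      intros y. f_equal. ring. apply EX_shift. apply N_EX.
Qed.

Definition u x := G (Z.to_nat (up x)) x.

Lemma up_nat x : x < INR (Z.to_nat (up x)) + 2.
Proof. destruct (archimed x) as [H1 H2].
  destruct (Z.lt_ge_cases (up x) 0) as [Hn|Hp].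
  - apply IZR_lt in Hn. simpl in Hn. pose proof (pos_INR (Z.to_nat (up x))). lra.
  - rewrite INR_IZR_INZ, Z2Nat.id by lia. lra.
Qed.

Lemma u_G n x : x < INR n + 2 -> u x = G n x.
Proof. intros Hx. unfold u. set (K := Z.to_nat (up x)).
  assert (HK : x < INR K + 2) by apply up_nat.
  destruct (le_lt_dec n K) as [H|H].
  - replace K with (n + (K - n))%nat by lia. apply G_stable; auto.
  - replace n with (K + (n - K))%nat by lia. symmetry. apply G_stable; auto.
Qed.

Lemma nat_above X : exists n, X < INR n.
Proof. destruct (INR_unbounded X) as [n Hn]. exists n. lra. Qed.

Lemma u_EX : EX u.
Proof. intros a b. destruct (nat_above (Rabs a + Rabs b)) as [n Hn].
  apply (ex_RInt_ext (G n)). 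
  - intros x Hx. symmetry. apply u_G.
    pose proof (Rle_abs a). pose proof (Rle_abs b). pose proof (Rabs_pos a). pose proof (Rabs_pos b).
    unfold Rmin, Rmax in Hx. destruct (Rle_dec a b); lra.
  - apply G_EX.
Qed.

Lemma u_rec x : u x = chi01 (x - 1) + RInt u (x - 2) (x - 1).
Proof. destruct (nat_above x) as [n Hn].
  rewrite (u_G (S n)) by (rewrite S_INR; lra). rewrite G_rec. f_equal.
  apply RInt_ext. intros y Hy. rewrite Rmin_left in Hy by lra. rewrite Rmax_right in Hy by lra.
  symmetry. apply u_G. lra.
Qed.

Lemma u_ge0 x : 0 <= u x.
Proof. unfold u. apply G_bounds. Qed.

Lemma u_le n x : x < INR n + 2 -> u x <= INR n + 1.
Proof. intros H. rewrite (u_G n) by auto. apply G_bounds. Qed.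

Lemma u_zero x : x < 1 -> u x = 0.
Proof. intros H. rewrite (u_G 0) by (simpl; lra). unfold G. simpl.
  unfold chi01. destruct (Rle_dec 0 (x - 1 + 0)); lra. Qed.



Definition P (x : R) : R := RInt u 0 x.
Definition Q (x : R) : R := RInt P 0 x.
Definition Psi x := P x - (Q (x - 1) - Q (x - 2)).

Lemma P_cont x : Cont P x.
Proof. apply C_prim. apply u_EX. Qed.

Lemma P_EX : EX P.
Proof. apply C_EX. apply P_cont. Qed.

Lemma P_diff a b : @eq R (P b - P a) (RInt u a b).
Proof. unfold P. rewrite <- (Chas u 0 a b) by apply u_EX. ring. Qed.

Lemma Q_diff a b : @eq R (Q b - Q a) (RInt P a b).
Proof. unfold Q. rewrite <- (Chas P 0 a b) by apply P_EX. ring. Qed.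

Lemma loc_gt a x : a < x -> locally x (fun y => a < y).
Proof. intros H. apply (locally_open (fun y => a < y)). apply open_gt. auto. auto. Qed.

Lemma u_cont x : 2 < x -> Cont u x.
Proof. intros Hx.
  apply (C_ext_loc (fun y => P (y - 1) - P (y - 2))).
  - apply (filter_imp (fun y => 2 < y)). 2: apply loc_gt; auto.
    intros y Hy. rewrite u_rec, P_diff. unfold chi01.
    destruct (Rle_dec 0 (y-1)); try lra. destruct (Rle_dec (y - 1) 1); lra.
  - apply C_minus; apply (C_sub1 P); apply P_cont.
Qed.

Lemma der_P x : Cont u x -> is_derive P x (u x).
Proof. intros H. apply (is_derive_RInt (V:=R_NormedModule) u P 0 x).
  apply filter_forall. intros y. apply RC. apply u_EX. exact H. Qed.

Lemma der_Q x : is_derive Q x (P x).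
Proof. apply (is_derive_RInt (V:=R_NormedModule) P Q 0 x).
  apply filter_forall. intros y. apply RC. apply P_EX. apply P_cont. Qed.

Lemma der_Qs c x : is_derive (fun y => Q (y - c)) x (P (x - c)).
Proof.
  assert (H := is_derive_comp (K:=R_AbsRing) (V:=R_NormedModule) Q (fun y => y - c) x (P (x - c)) 1 (der_Q (x - c))).
  assert (H2 : is_derive (fun y : R => y - c) x 1). { auto_derive; auto; ring. }
  specialize (H H2).
  replace (P (x - c)) with (scal 1 (P (x - c))). exact H.
  apply (scal_one (V:=R_NormedModule)).
Qed.

Lemma der_Psi x : 2 < x -> is_derive Psi x 0.
Proof. intros Hx.
  assert (H := is_derive_minus (K:=R_AbsRing) (V:=R_NormedModule) _ _ x _ _ (der_Qs 1 x) (der_Qs 2 x)).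
  assert (H2 := is_derive_minus (K:=R_AbsRing) (V:=R_NormedModule) _ _ x _ _ (der_P x (u_cont x Hx)) H).
  replace 0 with (minus (u x) (minus (P (x - 1)) (P (x - 2)))). exact H2.
  unfold minus, plus, opp; simpl. rewrite u_rec.
  unfold chi01. destruct (Rle_dec 0 (x-1)); try lra. destruct (Rle_dec (x - 1) 1); try lra.
  rewrite <- P_diff. ring.
Qed.

Lemma Psi_const x : 3 <= x -> Psi x = Psi 3.
Proof. intros Hx.
  destruct (MVT_gen Psi 3 x (fun _ => 0)) as [c [Hc E]].
  - intros y Hy. rewrite Rmin_left in Hy by lra. rewrite Rmax_right in Hy by lra. apply der_Psi. lra.
  - intros y Hy. rewrite Rmin_left in Hy by lra. rewrite Rmax_right in Hy by lra.
    apply continuity_pt_filterlim. apply (ex_derive_continuous (K:=R_AbsRing) (V:=R_NormedModule)).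
    exists 0. apply der_Psi. lra.
  - lra.
Qed.

Lemma RI_lin1 c : @eq R (RInt (fun y => y - c) c (c + 1)) (1 / 2).
Proof. apply is_RInt_unique.
  replace (1/2) with ((c + 1 - c) ^ 2 / 2 - (c - c) ^ 2 / 2) by (simpl; field).
  apply (is_RInt_derive (fun y => (y - c) ^ 2 / 2)).
  - intros y _. auto_derive; auto. field.
  - intros y _. apply (C_minus (fun y => y) (fun _ => c)). apply C_id. apply C_const.
Qed.

Lemma RI_tri x m : @eq R (RInt (fun s => (x - s) * m) (x - 2) (x - 1)) (3 / 2 * m).
Proof. apply is_RInt_unique.
  replace (3 / 2 * m) with ((- (x - (x - 1)) ^ 2 / 2 * m) - (- (x - (x - 2)) ^ 2 / 2 * m)) by (simpl; field).
  apply (is_RInt_derive (fun s => - (x - s) ^ 2 / 2 * m)).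
  - intros y _. auto_derive; auto. field.
  - intros y _. apply C_mult. apply C_minus. apply C_const. apply C_id. apply C_const.
Qed.

Lemma u_one y : 1 < y < 2 -> u y = 1.
Proof. intros H. rewrite u_rec. rewrite RI_zero. unfold chi01.
  destruct (Rle_dec 0 (y-1)); try lra. destruct (Rle_dec (y - 1) 1); lra. lra.
  intros; apply u_zero; lra. Qed.

Lemma u_lin y : 2 < y < 3 -> u y = y - 2.
Proof. intros H. rewrite u_rec.
  rewrite <- (Chas u (y - 2) 1 (y - 1)) by apply u_EX.
  rewrite RI_zero by (try lra; intros; apply u_zero; lra).
  rewrite (RIext u (fun _ => 1)). rewrite RIc. unfold chi01.
  destruct (Rle_dec 0 (y-1)); try lra. destruct (Rle_dec (y - 1) 1); lra.
  intros x Hx. rewrite Rmin_left in Hx by lra. rewrite Rmax_right in Hx by lra. apply u_one. lra.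
Qed.

Lemma P_1 : P 1 = 0.
Proof. unfold P. apply RI_zero. lra. intros; apply u_zero; lra. Qed.

Lemma P_lin y : 1 <= y <= 2 -> P y = y - 1.
Proof. intros H. replace (P y) with (P y - P 1) by (rewrite P_1; ring). rewrite P_diff.
  rewrite (RIext u (fun _ => 1)). rewrite RIc. ring.
  intros x Hx. rewrite Rmin_left in Hx by lra. rewrite Rmax_right in Hx by lra. apply u_one. lra.
Qed.

Lemma Psi_3 : Psi 3 = 1.
Proof. unfold Psi. replace (3 - 1) with 2 by ring. replace (3 - 2) with 1 by ring.
  rewrite Q_diff.
  replace (P 3) with (P 2 + (P 3 - P 2)) by ring. rewrite P_diff.
  rewrite (RIext u (fun y => y - 2) 2 3).
  rewrite (RIext P (fun y => y - 1) 1 2).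
  replace 3 with (2 + 1) by ring. rewrite RI_lin1. replace 2 with (1 + 1) at 3 by ring. rewrite RI_lin1.
  rewrite P_lin by lra. field.
  - intros x Hx. rewrite Rmin_left in Hx by lra. rewrite Rmax_right in Hx by lra. apply P_lin. lra.
  - intros x Hx. rewrite Rmin_left in Hx by lra. rewrite Rmax_right in Hx by lra. apply u_lin. lra.
Qed.

Lemma Psi_bound x m M : (forall y, x - 2 <= y <= x -> m <= u y <= M) ->
  3 / 2 * m <= Psi x <= 3 / 2 * M.
Proof. intros H.
  assert (E : Psi x = RInt (fun s => P x - P s) (x - 2) (x - 1)).
  { unfold Psi. rewrite Q_diff. rewrite RI_minus. rewrite RIc. ring.
    apply ex_RInt_const. apply P_EX. }
  rewrite E. rewrite <- (RI_tri x m), <- (RI_tri x M).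
  assert (EXt : forall c, ex_RInt (fun s => (x - s) * c) (x - 2) (x - 1)).
  { intros c. apply (ex_RInt_continuous (V:=R_CompleteNormedModule)). intros z _.
    apply C_mult. apply C_minus. apply C_const. apply C_id. apply C_const. }
  assert (EXp : ex_RInt (fun s => P x - P s) (x - 2) (x - 1)).
  { apply EX_minus. intros a b; apply ex_RInt_const. apply P_EX. }
  split; apply RInt_le; auto; try lra; intros s Hs; rewrite P_diff.
  - apply RI_lower. lra. apply u_EX. intros; apply H; lra.
  - apply RI_upper. lra. apply u_EX. intros; apply H; lra.
Qed.



Definition Rec (h : R -> R) b := forall x, b <= x -> h x = RInt h (x - 2) (x - 1).

Lemma u_Rec : Rec u 3.
Proof. intros x Hx. rewrite u_rec at 1. unfold chi01.
  destruct (Rle_dec 0 (x-1)); try lra. destruct (Rle_dec (x - 1) 1); lra. Qed.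

Lemma Rec_mono h b b' : Rec h b -> b <= b' -> Rec h b'.
Proof. intros H Hb x Hx. apply H. lra. Qed.

Lemma Rec_lin b al be : Rec u b -> Rec (fun y => al * u y + be) b.
Proof. intros H x Hx. rewrite RI_lin by apply u_EX. rewrite <- H by auto. ring. Qed.

Lemma inv b m M : 3 <= b -> (forall y, b - 2 <= y <= b -> m <= u y <= M) ->
  forall y, b - 2 <= y -> m <= u y <= M.
Proof. intros Hb H.
  assert (Hn : forall n, forall y, b - 2 <= y <= b + INR n -> m <= u y <= M).
  { induction n as [|n IH]; intros y Hy.
    - apply H. simpl in Hy. lra.
    - rewrite S_INR in Hy. destruct (Rle_dec y (b + INR n)) as [Hl|Hl].
      + apply IH. lra.
      + pose proof (pos_INR n). rewrite (Rec_mono u 3 b u_Rec Hb y) by lra. split.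
        * assert (Hlo := RI_lower u (y - 2) (y - 1) m ltac:(lra) (u_EX _ _) (fun z Hz => proj1 (IH z ltac:(lra)))). lra.
        * assert (Hup := RI_upper u (y - 2) (y - 1) M ltac:(lra) (u_EX _ _) (fun z Hz => proj2 (IH z ltac:(lra)))). lra. }
  intros y Hy. destruct (nat_above (y - b)) as [n Hn']. apply (Hn n). lra.
Qed.

Lemma L0 h b : EX h -> (forall y, b - 2 <= y -> 0 <= h y) -> Rec h b ->
  forall x, b <= x <= b + 1/2 -> RInt h (b - 3/2) (b - 1) <= h x.
Proof. intros HE Hp HR x Hx. rewrite HR by lra.
  rewrite <- (Chas h (x - 2) (b - 3/2) (x - 1)) by apply HE.
  rewrite <- (Chas h (b - 3/2) (b - 1) (x - 1)) by apply HE.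
  assert (0 <= RInt h (x - 2) (b - 3/2)) by (apply RI_ge0; auto; try lra; intros; apply Hp; lra).
  assert (0 <= RInt h (b - 1) (x - 1)) by (apply RI_ge0; auto; try lra; intros; apply Hp; lra).
  lra.
Qed.

Lemma L1 h b p q c d : EX h -> (forall y, b - 2 <= y -> 0 <= h y) -> Rec h b ->
  0 <= c -> 0 < d <= 1 -> d <= q - p -> (forall y, p <= y <= q -> c <= h y) ->
  forall x, b <= x -> p + 1 + d <= x <= q + 2 - d -> c * d <= h x.
Proof. intros HE Hp HR Hc Hd Hdq Hpq x Hbx Hx. rewrite HR by lra.
  set (lo := Rmax (x - 2) p). set (hi := Rmin (x - 1) q).
  assert (Hlo : x - 2 <= lo /\ p <= lo /\ (lo = x - 2 \/ lo = p)).
  { unfold lo, Rmax. destruct (Rle_dec (x - 2) p); lra. }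
  assert (Hhi : hi <= x - 1 /\ hi <= q /\ (hi = x - 1 \/ hi = q)).
  { unfold hi, Rmin. destruct (Rle_dec (x - 1) q); lra. }
  assert (Hd2 : d <= hi - lo) by lra.
  rewrite <- (Chas h (x - 2) lo (x - 1)) by apply HE.
  rewrite <- (Chas h lo hi (x - 1)) by apply HE.
  assert (0 <= RInt h (x - 2) lo) by (apply RI_ge0; auto; try lra; intros; apply Hp; lra).
  assert (0 <= RInt h hi (x - 1)) by (apply RI_ge0; auto; try lra; intros; apply Hp; lra).
  assert ((hi - lo) * c <= RInt h lo hi) by (apply RI_lower; auto; try lra; intros; apply Hpq; lra).
  assert (c * d <= (hi - lo) * c) by nra.
  lra.
Qed.

Lemma L3 h b : EX h -> (forall y, b - 2 <= y -> 0 <= h y) -> Rec h b ->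
  forall x, b + 15/4 <= x <= b + 23/4 -> RInt h (b - 3/2) (b - 1) / 64 <= h x.
Proof. intros HE Hp HR.
  set (I := RInt h (b - 3/2) (b - 1)).
  assert (HI : 0 <= I) by (apply RI_ge0; auto; try lra; intros; apply Hp; lra).
  assert (H0 := L0 h b HE Hp HR).
  assert (H1 := L1 h b b (b + 1/2) I (1/4) HE Hp HR HI ltac:(lra) ltac:(lra) H0).
  assert (H2 := L1 h b (b + 5/4) (b + 9/4) (I * (1/4)) (1/4) HE Hp HR ltac:(lra) ltac:(lra) ltac:(lra)
     (fun y Hy => H1 y ltac:(lra) ltac:(lra))).
  assert (H3 := L1 h b (b + 5/2) (b + 4) (I * (1/4) * (1/4)) (1/4) HE Hp HR ltac:(lra) ltac:(lra) ltac:(lra)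
     (fun y Hy => H2 y ltac:(lra) ltac:(lra))).
  intros x Hx. specialize (H3 x ltac:(lra) ltac:(lra)). lra.
Qed.

Lemma step b m M : 3 <= b -> (forall y, b - 2 <= y -> m <= u y <= M) ->
  exists m' M', M' - m' <= 127/128 * (M - m) /\ forall y, b + 15/4 <= y -> m' <= u y <= M'.
Proof. intros Hb H.
  set (v := fun y => 1 * u y + - m). set (w := fun y => -1 * u y + M).
  assert (HRu : Rec u b) by (apply (Rec_mono u 3); auto; apply u_Rec).
  assert (Lv := L3 v b (EX_lin u 1 (- m) u_EX) (fun y Hy => ltac:(unfold v; specialize (H y Hy); lra)) (Rec_lin b 1 (- m) HRu)).
  assert (Lw := L3 w b (EX_lin u (-1) M u_EX) (fun y Hy => ltac:(unfold w; specialize (H y Hy); lra)) (Rec_lin b (-1) M HRu)).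
  set (Iv := RInt v (b - 3/2) (b - 1)) in *. set (Iw := RInt w (b - 3/2) (b - 1)) in *.
  assert (Hs : Iv + Iw = (M - m) / 2).
  { unfold Iv, Iw, v, w. rewrite !RI_lin by apply u_EX. field. }
  assert (Hv0 : 0 <= Iv) by (apply RI_ge0; [lra | apply EX_lin, u_EX | intros; unfold v; specialize (H x ltac:(lra)); lra]).
  assert (Hw0 : 0 <= Iw) by (apply RI_ge0; [lra | apply EX_lin, u_EX | intros; unfold w; specialize (H x ltac:(lra)); lra]).
  exists (m + Iv / 64), (M - Iw / 64). split. lra.
  intros y0 Hy0. apply (inv (b + 23/4)); [lra| |lra].
  intros y Hy. specialize (Lv y ltac:(lra)). specialize (Lw y ltac:(lra)). unfold v, w in *. lra.
Qed.

Lemma iter k : exists m M, M - m <= (127/128) ^ k * 3 /\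
  forall y, 1 + INR k * (23/4) <= y -> m <= u y <= M.
Proof. induction k as [|k IH].
  - exists 0, 3. split. simpl; lra.
    intros y0 Hy0. apply (inv 3); [lra| |simpl in Hy0; lra]. intros y Hy. split. apply u_ge0.
    assert (u y <= INR 2 + 1) by (apply u_le; simpl; lra). simpl in H; lra.
  - destruct IH as [m [M [HD HB]]].
    destruct (step (3 + INR k * (23/4)) m M) as [m' [M' [HD' HB']]].
    + pose proof (pos_INR k). nra.
    + intros y Hy. apply HB. lra.
    + exists m', M'. split.
      * simpl. assert (0 <= M - m). { pose proof (HB (1 + INR k * (23/4)) ltac:(lra)). lra. } nra.
      * intros y Hy. apply HB'. rewrite S_INR in Hy. lra.
Qed.

Lemma u_lim eps : 0 < eps -> exists X, forall y, X <= y -> Rabs (u y - 2/3) < eps.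
Proof. intros He.
  destruct (pow_lt_1_zero (127/128) ltac:(rewrite Rabs_right; lra) (eps / 3) ltac:(lra)) as [k Hk].
  specialize (Hk k (le_n k)).
  destruct (iter k) as [m [M [HD HB]]].
  exists (1 + INR k * (23/4)). intros y Hy.
  set (x := 3 + INR k * (23/4)).
  assert (Hx : 3 <= x) by (unfold x; pose proof (pos_INR k); nra).
  assert (HP := Psi_bound x m M (fun z Hz => HB z ltac:(unfold x in *; lra))).
  rewrite Psi_const, Psi_3 in HP by auto.
  specialize (HB y Hy).
  rewrite Rabs_right in Hk by (apply Rle_ge, pow_le; lra).
  apply Rabs_def1; lra.
Qed.



Definition aa (tau : R) (i : nat) := tau ^ i / INR (fact i).

Lemma aa_S tau i : aa tau (S i) = aa tau i * (tau / INR (S i)).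
Proof. unfold aa. rewrite fact_simpl, mult_INR. simpl pow.
  assert (INR (fact i) <> 0) by apply INR_fact_neq_0.
  assert (INR (S i) <> 0) by (apply not_0_INR; lia). field; auto. Qed.

Lemma aa_ge0 tau i : 0 <= tau -> 0 <= aa tau i.
Proof. intros. unfold aa. apply Rdiv_le_0_compat. apply pow_le; auto. apply lt_0_INR, lt_O_fact. Qed.

Lemma aa_half tau i : 0 <= tau -> 2 * tau <= INR (S i) -> 2 * aa tau (S i) <= aa tau i.
Proof. intros H0 H. rewrite aa_S. pose proof (aa_ge0 tau i H0).
  assert (0 < INR (S i)) by (apply lt_0_INR; lia).
  assert (tau / INR (S i) <= 1/2).
  { apply (Rmult_le_reg_r (INR (S i))); auto. unfold Rdiv. rewrite Rmult_assoc, Rinv_l by lra. lra. }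
  assert (0 <= tau / INR (S i)) by (apply Rdiv_le_0_compat; lra). nra.
Qed.

Lemma N_aa m y tau : y <= tau -> 0 <= tau -> N m y <= aa tau m.
Proof. intros H H0. destruct (Rlt_dec y 0).
  - rewrite N_neg by auto. apply aa_ge0; auto.
  - eapply Rle_trans. apply N_pow. lra. unfold aa, Rdiv. apply Rmult_le_compat_r.
    left. apply Rinv_0_lt_compat, lt_0_INR, lt_O_fact. apply pow_incr. lra.
Qed.

Lemma tail n p t : let tau := Rabs t in 2 * tau <= INR (S n) ->
  0 <= G (n + p) (INR (S n) + t) - G n (INR (S n) + t) <= 2 * aa tau (S n) - 2 * aa tau (S (n + p)).
Proof. intros tau Ht. assert (Ht0 : 0 <= tau) by apply Rabs_pos.
  induction p as [|p IH].
  - rewrite Nat.add_0_r. lra.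
  - rewrite Nat.add_succ_r, G_S.
    assert (HN := N_bounds (S (n + p)) (INR (S n) + t - INR (S (S (n + p))))).
    assert (HA : N (S (n + p)) (INR (S n) + t - INR (S (S (n + p)))) <= aa tau (S (n + p))).
    { apply N_aa; auto. rewrite !S_INR, plus_INR. pose proof (pos_INR p). pose proof (Rle_abs t). unfold tau. lra. }
    assert (HH : 2 * aa tau (S (S (n + p))) <= aa tau (S (n + p))).
    { apply aa_half; auto. rewrite !S_INR, plus_INR in *. pose proof (pos_INR p). lra. }
    lra.
Qed.

Lemma F_G n t : sum_f_R0 (fun k => Bspline (n - k)%nat (INR k + t)) n = G n (INR (S n) + t).
Proof. unfold G. apply sum_eq. intros i _. f_equal. ring. Qed.

Theorem mainTheorem14 (t : R) (ht : 0 < t) :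
  is_lim_seq (fun n : nat => sum_f_R0 (fun k : nat => Bspline (n - k)%nat (INR k + t)) n)
             (2 / 3).
Proof.
  apply is_lim_seq_Reals. intros eps He.
  set (tau := Rabs t). assert (Ht0 : 0 <= tau) by apply Rabs_pos.
  destruct (u_lim (eps / 2) ltac:(lra)) as [X HX].
  destruct (cv_speed_pow_fact tau (eps / 4) ltac:(lra)) as [N1 HN1].
  destruct (nat_above (2 * tau)) as [N2 HN2].
  destruct (nat_above X) as [N3 HN3].
  exists (N1 + N2 + N3)%nat. intros n Hn.
  rewrite F_G. unfold R_dist.
  destruct (nat_above t) as [p Hp].
  assert (Hu : u (INR (S n) + t) = G (n + p) (INR (S n) + t)).
  { apply u_G. rewrite S_INR, plus_INR. lra. }
  assert (Hle : 2 * tau <= INR (S n)).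
  { assert (INR N2 <= INR (S n)) by (apply le_INR; lia). lra. }
  assert (HT := tail n p t Hle).
  assert (Ha : aa tau (S n) < eps / 4).
  { specialize (HN1 (S n) ltac:(lia)). unfold R_dist in HN1. rewrite Rminus_0_r in HN1.
    unfold aa. apply Rabs_def2 in HN1. lra. }
  assert (Hx : X <= INR (S n) + t).
  { assert (INR N3 <= INR (S n)) by (apply le_INR; lia). lra. }
  specialize (HX _ Hx).
  pose proof (aa_ge0 tau (S (n + p)) Ht0).
  fold tau in HT. rewrite <- Hu in HT.
  apply Rabs_def2 in HX. apply Rabs_def1; lra.
Qed.
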